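(* For every $\eta\ge0$ define \[ L_{\Phi,\eta}:=\max_{\pi\in\Theta}\|M_\pi+\eta I\|_2. \] Then \[ \rho^{\mathrm{dir}}_{\alpha,\eta}\le\sqrt{1-2\alpha(c_\Phi+\eta)+\alpha^2L_{\Phi,\eta}^2}. \] Since $L_{\Phi,\eta}\le L_\Phi+\eta$, also \[ \rho^{\mathrm{dir}}_{\alpha,\eta}\le\sqrt{1-2\alpha(c_\Phi+\eta)+\alpha^2(L_\Phi+\eta)^2}. \] Hence, if $c_\Phi+\eta>0$ and $0<\alpha<2(c_\Phi+\eta)/L_{\Phi,\eta}^2$, then $\rho^{\mathrm{dir}}_{\alpha,\eta}<1$. The same conclusion holds if $c_\Phi+\eta>0$ and $0<\alpha<2(c_\Phi+\eta)/(L_\Phi+\eta)^2$.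
   Context: Consider a finite discounted MDP with state space $\mathcal S=\{1,\dots,|\mathcal S|\}$, action space $\mathcal A=\{1,\dots,|\mathcal A|\}$, transition probabilities $P(s'\mid s,a)$, and discount factor $\gamma\in(0,1)$. State-action vectors are ordered as $(1,1),(2,1),\dots,(|\mathcal S|,1),(1,2),\dots$. The matrix $P\in\mathbb R^{|\mathcal S||\mathcal A|\times|\mathcal S|}$ has rows $P(\cdot\mid s,a)$. The set $\Theta$ is the finite set of deterministic stationary policies $\pi:\mathcal S\to\mathcal A$. For $\pi\in\Theta$, $\Pi^\pi$ has entry $1$ at row $s$, column $(s,\pi(s))$, and zeros elsewhere. The feature matrix $\Phi\in\mathbb R^{|\mathcal S||\mathcal A|\times m}$ has full column rank. The distribution $d>0$ on $\mathcal S\times\mathcal A$ gives $D=\mathrm{diag}(d)$. The step size is $\alpha\in(0,1)$ and the regularization weight is $\eta\ge0$. Let $M_\pi:=\Phi^\top D\Phi-\gamma\Phi^\top DP\Pi^\pi\Phi$. Define \[ c_\Phi:=\min_{\pi\in\Theta}\lambda_{\min}\big((M_\pi+M_\pi^\top)/2\big),\qquad L_\Phi:=\max_{\pi\in\Theta}\|M_\pi\|_2. \] For $\pi\in\Theta$, define $A^\eta_\pi:=I-\alpha(M_\pi+\eta I)$, and let $\rho^{\mathrm{dir}}_{\alpha,\eta}$ be the joint spectral radius $\lim_k\max_{\pi_i\in\Theta}\|A^\eta_{\pi_k}\cdots A^\eta_{\pi_1}\|^{1/k}$ of $\{A^\eta_\pi:\pi\in\Theta\}$. *)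

(* Defs.v *)
From HB Require Import structures.
From mathcomp Require Import all_boot all_order all_algebra.
From mathcomp Require Import all_classical all_reals all_analysis.
Set Implicit Arguments. Unset Strict Implicit. Unset Printing Implicit Defensive.
Import Order.TTheory GRing.Theory Num.Theory.
Local Open Scope classical_set_scope.
Local Open Scope ring_scope.

Section Defs.
Variable R : realType.

Definition vnorm2 (n : nat) (x : 'cV[R]_n) : R :=
  Num.sqrt (\sum_(i < n) (x i 0) ^+ 2).

Definition opnorm2 (n p : nat) (A : 'M[R]_(n, p)) : R :=
  sup [set vnorm2 (A *m x) | x in [set x : 'cV[R]_p | vnorm2 x <= 1]].

(* Smallest (real) eigenvalue of a square matrix (used on symmetric ones,
   whose eigenvalues are all real). *)
Definition lambda_min (n : nat) (S : 'M[R]_n) : R :=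
  inf [set a : R | eigenvalue S a].

Definition policy (nS nA : nat) := {ffun 'I_nS -> 'I_nA}.

(* Index of the state-action pair (s,a) in the ordering
   (1,1),(2,1),...,(|S|,1),(1,2),... : it is a*|S| + s. *)
Definition sa_idx (nS nA : nat) (s : 'I_nS) (a : 'I_nA) : 'I_(nA * nS) :=
  mxvec_index a s.

Definition Pimx (nS nA : nat) (pi : policy nS nA) : 'M[R]_(nS, nA * nS) :=
  \matrix_(s < nS, j < nA * nS) (j == sa_idx s (pi s))%:R.

Definition Mpi (nS nA m : nat) (Phi : 'M[R]_(nA * nS, m))
  (d : 'rV[R]_(nA * nS)) (P : 'M[R]_(nA * nS, nS)) (gamma : R)
  (pi : policy nS nA) : 'M[R]_m :=
  Phi^T *m diag_mx d *m Phi - gamma *: (Phi^T *m diag_mx d *m P *m Pimx pi *m Phi).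

Definition jsr (I : finType) (m : nat) (A : I -> 'M[R]_m) : R :=
  lim ((fun k : nat =>
     (sup [set opnorm2 (\prod_(j < k.+1) A (f (rev_ord j))) |
             f in [set: 'I_k.+1 -> I]]) `^ (k.+1%:R)^-1) @ \oo).

End Defs.

(* Main.v *)
Require Import Defs.
From HB Require Import structures.
From mathcomp Require Import all_boot all_order all_algebra.
From mathcomp Require Import all_classical all_reals all_analysis.
From mathcomp Require Import ring lra.
Import Order.TTheory GRing.Theory Num.Theory.
Local Open Scope classical_set_scope.
Local Open Scope ring_scope.
Set Implicit Arguments. Unset Strict Implicit. Unset Printing Implicit Defensive.

Section Aux.
Variable R : realType.

Definition dot n (x y : 'cV[R]_n) : R := \sum_i x i 0 * y i 0.

Lemma dotC n (x y : 'cV[R]_n) : dot x y = dot y x.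
Proof. by apply: eq_bigr => i _; rewrite mulrC. Qed.

Lemma dotDr n (x y z : 'cV[R]_n) : dot x (y + z) = dot x y + dot x z.
Proof. by rewrite /dot -big_split; apply: eq_bigr => i _; rewrite mxE mulrDr. Qed.

Lemma dotDl n (x y z : 'cV[R]_n) : dot (y + z) x = dot y x + dot z x.
Proof. by rewrite dotC dotDr !(dotC x). Qed.

Lemma dotZr n a (x y : 'cV[R]_n) : dot x (a *: y) = a * dot x y.
Proof. by rewrite /dot mulr_sumr; apply: eq_bigr => i _; rewrite mxE mulrCA. Qed.

Lemma dotZl n a (x y : 'cV[R]_n) : dot (a *: y) x = a * dot y x.
Proof. by rewrite dotC dotZr dotC. Qed.

Lemma dotNr n (x y : 'cV[R]_n) : dot x (- y) = - dot x y.
Proof. by rewrite -scaleN1r dotZr mulN1r. Qed.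

Lemma dotNl n (x y : 'cV[R]_n) : dot (- y) x = - dot y x.
Proof. by rewrite dotC dotNr dotC. Qed.

Lemma dotBr n (x y z : 'cV[R]_n) : dot x (y - z) = dot x y - dot x z.
Proof. by rewrite dotDr dotNr. Qed.

Lemma dotBl n (x y z : 'cV[R]_n) : dot (y - z) x = dot y x - dot z x.
Proof. by rewrite dotDl dotNl. Qed.

Lemma dot0r n (x : 'cV[R]_n) : dot x 0 = 0.
Proof. by rewrite /dot big1 // => i _; rewrite mxE mulr0. Qed.

Lemma dot_ge0 n (x : 'cV[R]_n) : 0 <= dot x x.
Proof. by apply: sumr_ge0 => i _; rewrite -expr2 sqr_ge0. Qed.

Lemma dot_eq0 n (x : 'cV[R]_n) : dot x x = 0 -> x = 0.
Proof.
move=> h; apply/matrixP => i j; rewrite ord1 mxE.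
have h0 : x i 0 * x i 0 = 0.
  by apply: (@psumr_eq0P _ _ xpredT (fun i => x i 0 * x i 0) _ h) => // k _; rewrite -expr2 sqr_ge0.
by move/eqP: h0; rewrite mulf_eq0 orbb => /eqP.
Qed.

Lemma dot_mulmx n p (A : 'M[R]_(n, p)) x y : dot x (A *m y) = dot (A^T *m x) y.
Proof.
rewrite /dot.
under eq_bigr => i _ do rewrite mxE mulr_sumr.
rewrite exchange_big /=; apply: eq_bigr => j _.
rewrite mxE mulr_suml; apply: eq_bigr => i _.
by rewrite mxE mulrCA mulrA.
Qed.

Lemma vnorm2E n (x : 'cV[R]_n) : vnorm2 x = Num.sqrt (dot x x).
Proof. by rewrite /vnorm2 /dot; congr Num.sqrt; apply: eq_bigr => i _; rewrite expr2. Qed.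

Lemma young n (x y : 'cV[R]_n) : 2 * dot x y <= dot x x + dot y y.
Proof.
have := dot_ge0 (x - y).
rewrite dotBl !dotBr (dotC y x); lra.
Qed.

Lemma youngN n (x y : 'cV[R]_n) : - (dot x x + dot y y) <= 2 * dot x y.
Proof.
have := dot_ge0 (x + y).
rewrite dotDl !dotDr (dotC y x); lra.
Qed.

Lemma cs n (x y : 'cV[R]_n) : dot x y <= vnorm2 x * vnorm2 y.
Proof.
rewrite !vnorm2E.
set a := Num.sqrt (dot x x); set b := Num.sqrt (dot y y).
have ha : a ^+ 2 = dot x x by rewrite sqr_sqrtr // dot_ge0.
have hb : b ^+ 2 = dot y y by rewrite sqr_sqrtr // dot_ge0.
have a0 : 0 <= a by apply: sqrtr_ge0.
have b0 : 0 <= b by apply: sqrtr_ge0.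
have [az|anz] := eqVneq a 0.
  have : dot x x = 0 by rewrite -ha az expr0n.
  by move/dot_eq0 => ->; rewrite dotC dot0r az mul0r.
have [bz|bnz] := eqVneq b 0.
  have : dot y y = 0 by rewrite -hb bz expr0n.
  by move/dot_eq0 => ->; rewrite dot0r bz mulr0.
have := young (b *: x) (a *: y).
rewrite !dotZl !dotZr -ha -hb => h.
have p : 0 < a * b by rewrite mulr_gt0 // lt0r ?anz ?bnz.
nra.
Qed.

Lemma cs2 n (x y : 'cV[R]_n) : dot x y ^+ 2 <= dot x x * dot y y.
Proof.
have h1 := cs x y.
have h2 := cs x (- y).
rewrite dotNr (vnorm2E (- y)) dotNl dotNr opprK -vnorm2E in h2.
have a0 : 0 <= vnorm2 x by rewrite vnorm2E sqrtr_ge0.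
have b0 : 0 <= vnorm2 y by rewrite vnorm2E sqrtr_ge0.
have -> : dot x x = vnorm2 x ^+ 2 by rewrite vnorm2E sqr_sqrtr // dot_ge0.
have -> : dot y y = vnorm2 y ^+ 2 by rewrite vnorm2E sqr_sqrtr // dot_ge0.
nra.
Qed.


Lemma vnorm2_ge0 n (x : 'cV[R]_n) : 0 <= vnorm2 x.
Proof. by rewrite vnorm2E sqrtr_ge0. Qed.

Lemma vnorm2_sq n (x : 'cV[R]_n) : vnorm2 x ^+ 2 = dot x x.
Proof. by rewrite vnorm2E sqr_sqrtr // dot_ge0. Qed.

Lemma mx_bound n p (A : 'M[R]_(n, p)) :
  exists2 K, 0 <= K & forall x, dot (A *m x) (A *m x) <= K * dot x x.
Proof.
exists (\sum_i dot (row i A)^T (row i A)^T).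
  by apply: sumr_ge0 => i _; apply: dot_ge0.
move=> x.
have hA : forall i, (A *m x) i 0 = dot (row i A)^T x.
  by move=> i; rewrite mxE; apply: eq_bigr => j _; rewrite !mxE.
rewrite {1}/dot mulr_suml; apply: ler_sum => i _.
by rewrite hA -expr2 cs2.
Qed.

Lemma vnorm2Z n a (x : 'cV[R]_n) : vnorm2 (a *: x) = `|a| * vnorm2 x.
Proof.
by rewrite !vnorm2E dotZl dotZr mulrA -expr2 sqrtrM ?sqr_ge0 // sqrtr_sqr.
Qed.

Lemma vnorm2_bound n p (A : 'M[R]_(n, p)) :
  exists2 K, 0 <= K & forall x, vnorm2 (A *m x) <= K * vnorm2 x.
Proof.
have [K K0 hK] := mx_bound A.
exists (Num.sqrt K); first exact: sqrtr_ge0.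
by move=> x; rewrite !vnorm2E -sqrtrM // ler_sqrt ?hK // mulr_ge0 // dot_ge0.
Qed.

Lemma vnorm2D n (x y : 'cV[R]_n) : vnorm2 (x + y) <= vnorm2 x + vnorm2 y.
Proof.
have h : dot (x + y) (x + y) <= (vnorm2 x + vnorm2 y) ^+ 2.
  rewrite dotDl !dotDr (dotC y x) sqrrD !vnorm2_sq.
  have := cs x y; lra.
rewrite vnorm2E -(ger0_norm (addr_ge0 (vnorm2_ge0 x) (vnorm2_ge0 y))) -sqrtr_sqr.
by rewrite ler_sqrt // sqr_ge0.
Qed.

Lemma vnorm2_eq0 n (x : 'cV[R]_n) : vnorm2 x = 0 -> x = 0.
Proof. by move=> h; apply: dot_eq0; rewrite -vnorm2_sq h expr0n. Qed.

Definition opset n p (A : 'M[R]_(n, p)) :=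
  [set vnorm2 (A *m x) | x in [set x : 'cV[R]_p | vnorm2 x <= 1]].

Lemma opset_sup n p (A : 'M[R]_(n, p)) : has_sup (opset A).
Proof.
split.
  exists (vnorm2 (A *m 0)), 0 => //=.
  by rewrite vnorm2E /dot big1 ?sqrtr0 // => i _; rewrite mxE mul0r.
have [K K0 hK] := vnorm2_bound A.
exists K => _ [x /= hx <-].
apply: (le_trans (hK x)).
by rewrite -[leRHS]mulr1 ler_wpM2l.
Qed.

Lemma opnorm2_ge0 n p (A : 'M[R]_(n, p)) : 0 <= opnorm2 A.
Proof.
apply: (@le_trans _ _ (vnorm2 (A *m 0))); first exact: vnorm2_ge0.
apply: (sup_upper_bound (opset_sup A)).
exists 0 => //=.
by rewrite vnorm2E /dot big1 ?sqrtr0 // => i _; rewrite mxE mul0r.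
Qed.

Lemma opnorm2_vec n p (A : 'M[R]_(n, p)) x :
  vnorm2 (A *m x) <= opnorm2 A * vnorm2 x.
Proof.
have [x0|xn0] := eqVneq (vnorm2 x) 0.
  by rewrite x0 mulr0 (vnorm2_eq0 x0) mulmx0 vnorm2E dot0r sqrtr0.
have xp : 0 < vnorm2 x by rewrite lt0r xn0 vnorm2_ge0.
set u := (vnorm2 x)^-1 *: x.
have hu : vnorm2 u = 1.
  by rewrite vnorm2Z ger0_norm ?invr_ge0 ?vnorm2_ge0 // mulVf.
have : vnorm2 (A *m u) <= opnorm2 A.
  by apply: (sup_upper_bound (opset_sup A)); exists u => //=; rewrite hu.
rewrite /u -scalemxAr vnorm2Z ger0_norm ?invr_ge0 ?vnorm2_ge0 //.
by rewrite ler_pdivrMl // mulrC.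
Qed.

Lemma opnorm2_le n p (A : 'M[R]_(n, p)) s : 0 <= s ->
  (forall x, vnorm2 (A *m x) <= s * vnorm2 x) -> opnorm2 A <= s.
Proof.
move=> s0 h; apply: ge_sup; first by case: (opset_sup A).
move=> _ [x /= hx <-].
by apply: (le_trans (h x)); rewrite -[leRHS]mulr1 ler_wpM2l.
Qed.


Lemma normalize n (x : 'cV[R]_n) : x != 0 ->
  dot ((vnorm2 x)^-1 *: x) ((vnorm2 x)^-1 *: x) = 1.
Proof.
move=> xn0.
have xp : 0 < vnorm2 x.
  rewrite lt0r vnorm2_ge0 andbT; apply/eqP => /vnorm2_eq0 h.
  by rewrite h eqxx in xn0.
by rewrite -vnorm2_sq vnorm2Z ger0_norm ?invr_ge0 ?vnorm2_ge0 // mulVf ?expr1n // gt_eqF.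
Qed.

Lemma rayleigh m (S : 'M[R]_m) : (0 < m)%N -> S^T = S ->
  forall x, lambda_min S * dot x x <= dot x (S *m x).
Proof.
move=> hm ST.
set E := [set dot x (S *m x) | x in [set x : 'cV[R]_m | dot x x = 1]].
have E0 : E !=set0.
  set e := const_mx 1 : 'cV[R]_m.
  have en0 : e != 0.
    apply/eqP => /matrixP /(_ (Ordinal hm) 0); rewrite !mxE => /eqP.
    by rewrite oner_eq0.
  by exists (dot ((vnorm2 e)^-1 *: e) (S *m ((vnorm2 e)^-1 *: e))), ((vnorm2 e)^-1 *: e) => //=; rewrite normalize.
have [KS KS0 hKS] := mx_bound S.
have hinf : has_inf E.
  split => //; exists (- (1 + KS)) => _ [x /= hx <-].
  have := youngN x (S *m x); have := hKS x; rewrite hx; lra.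
set mu := inf E.
have hA : forall x, mu * dot x x <= dot x (S *m x).
  move=> x; have [x0|xn0] := eqVneq x 0.
    by rewrite x0 mulmx0 dot0r mulr0.
  have xp : 0 < vnorm2 x.
    rewrite lt0r vnorm2_ge0 andbT; apply/eqP => /vnorm2_eq0 h.
    by rewrite h eqxx in xn0.
  set v := vnorm2 x.
  have : mu <= dot (v^-1 *: x) (S *m (v^-1 *: x)).
    have hE : E (dot (v^-1 *: x) (S *m (v^-1 *: x))).
      by exists (v^-1 *: x) => //=; rewrite normalize.
    exact: (ge_inf hinf.2 hE).
  rewrite -scalemxAr dotZl dotZr -vnorm2_sq -/v => h.
  have h2 := ler_wpM2r (sqr_ge0 v) h.
  have e : v^-1 * (v^-1 * dot x (S *m x)) * v ^+ 2 = dot x (S *m x).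
    by field; rewrite gt_eqF.
  by rewrite e in h2.
set T := S - mu%:M.
have Tz : forall z : 'cV[R]_m, T *m z = S *m z - mu *: z.
  by move=> z; rewrite /T mulmxBl mul_scalar_mx.
have hT : forall z : 'cV[R]_m, 0 <= dot z (T *m z).
  by move=> z; rewrite Tz dotBr dotZr subr_ge0 hA.
have TT : T^T = T by rewrite /T linearB /= ST tr_scalar_mx.
have hB : eigenvalue S mu.
  have : \det T == 0.
    apply: contraT => hdet.
    have Tu : T \in unitmx by rewrite unitmxE unitfE.
    have [K1 K10 hK1] := mx_bound (invmx T).
    have hinv : forall z : 'cV[R]_m, dot z z <= K1 * dot (T *m z) (T *m z).
      by move=> z; have := hK1 (T *m z); rewrite mulKmx.
    have [KT KT0 hKT] := mx_bound T.
    set K2 := 1 + KT.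
    have K2p : 0 < K2 by rewrite /K2; lra.
    have hK2 : forall z : 'cV[R]_m, dot z (T *m z) <= K2 * dot z z.
      move=> z; have := young z (T *m z); have := hKT z; have := dot_ge0 z.
      rewrite /K2 => h1 h2 h3.
      have := mulr_ge0 KT0 h1; lra.
    set eps := (K1 * K2 + 1)^-1.
    have K12 : 0 <= K1 * K2 by rewrite mulr_ge0 // ltW.
    have epsp : 0 < eps by rewrite invr_gt0; lra.
    have hepsK : K1 * K2 * eps < 1.
      rewrite /eps ltr_pdivrMr; lra.
    have [_ [x /= hx <-] hlt] := inf_adherent epsp hinf.
    have d1lt : dot x (T *m x) < eps.
      by rewrite Tz dotBr dotZr hx mulr1; lra.
    set y := T *m x.
    set s := K2^-1.
    have sK : s * K2 = 1 by rewrite mulVf // gt_eqF.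
    have sp : 0 < s by rewrite invr_gt0.
    have := hT (x - s *: y).
    rewrite mulmxBr -scalemxAr dotBl !dotBr !dotZl !dotZr.
    rewrite (dot_mulmx T x y) TT -/y.
    have hy := hK2 y.
    have r0 := dot_ge0 y.
    move=> h.
    have h3 : s * s * dot y (T *m y) <= s * s * (K2 * dot y y).
      by rewrite ler_wpM2l // mulr_ge0 // ltW.
    have h4 : s * s * (K2 * dot y y) = s * dot y y.
      by rewrite mulrA -(mulrA s s K2) sK mulr1.
    have h5 : dot y y <= K2 * dot x (T *m x).
      have h6 : s * dot y y <= dot x (T *m x) by lra.
      have := ler_wpM2l (ltW K2p) h6.
      by rewrite mulrA (mulrC K2 s) sK mul1r.
    have := hinv x; rewrite hx -/y => h7.
    have h8 : K1 * dot y y <= K1 * (K2 * dot x (T *m x)) by rewrite ler_wpM2l.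
    have h9 : K1 * K2 * dot x (T *m x) <= K1 * K2 * eps by rewrite ler_wpM2l // ltW.
    rewrite mulrA in h8.
    have := le_lt_trans (le_trans h7 (le_trans h8 h9)) hepsK.
    by rewrite ltxx.
  move/det0P => [v vn0 hv]; apply/eigenvalueP; exists v => //.
  by apply/eqP; rewrite -subr_eq0 -mul_mx_scalar -mulmxBr hv.
have hC : lambda_min S <= mu.
  suff hlb : has_lbound [set a | eigenvalue S a] by exact: (ge_inf hlb hB).
  exists mu => a /eigenvalueP [v hv vn0].
  set x := v^T.
  have Sx : S *m x = a *: x by rewrite /x -{1}ST -trmx_mul hv linearZ.
  have xp : 0 < dot x x.
    rewrite lt0r dot_ge0 andbT; apply/eqP => /dot_eq0 h.
    by move: vn0; rewrite -(trmxK v) -/x h trmx0 eqxx.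
  have := hA x; rewrite Sx dotZr.
  by rewrite ler_pM2r.
move=> x; apply: le_trans (hA x).
by rewrite ler_wpM2r // dot_ge0.
Qed.


Lemma fin_ub (T : finType) (f : T -> R) : has_ubound [set f t | t in [set: T]].
Proof.
exists (\sum_t `|f t|) => _ [t _ <-].
apply: (le_trans (ler_norm _)).
rewrite (bigD1 t) //= lerDl; apply: sumr_ge0 => i _; exact: normr_ge0.
Qed.

Lemma fin_lb (T : finType) (f : T -> R) : has_lbound [set f t | t in [set: T]].
Proof.
exists (- \sum_t `|f t|) => _ [t _ <-].
have h : `|f t| <= \sum_t `|f t|.
  rewrite (bigD1 t) //= lerDl; apply: sumr_ge0 => i _; exact: normr_ge0.
have := ler_norm (- f t); rewrite normrN; lra.
Qed.

Lemma prod_bound m n (F : 'I_n -> 'M[R]_m) s : 0 <= s ->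
  (forall j x, vnorm2 (F j *m x) <= s * vnorm2 x) ->
  forall x, vnorm2 ((\prod_(j < n) F j) *m x) <= s ^+ n * vnorm2 x.
Proof.
move=> s0; elim: n F => [|n IH] F hF x.
  by rewrite big_ord0 expr0 mul1r mul1mx.
rewrite big_ord_recl -mulmxE -mulmxA exprS -mulrA.
apply: (le_trans (hF _ _)); rewrite ler_wpM2l //.
by apply: IH => j y; apply: hF.
Qed.

Lemma jsr_le (I : finType) m (A : I -> 'M[R]_m) (b : R) : 0 <= b ->
  (forall k : nat, (sup [set opnorm2 (\prod_(j < k.+1) A (f (rev_ord j))) |
             f in [set: 'I_k.+1 -> I]]) `^ (k.+1%:R)^-1 <= b) -> jsr A <= b.
Proof. move=> b0 hf. rewrite /jsr.
set g := (fun k : nat => _).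
have [cv|ncv] := pselect (cvg (g @ \oo)).
  apply: limr_le => //. by near=> n; apply: hf.
by rewrite dvgP.
Unshelve. all: end_near. Qed.

Lemma jsr_bound (I : finType) m (A : I -> 'M[R]_m) s (i0 : I) : 0 <= s ->
  (forall i x, vnorm2 (A i *m x) <= s * vnorm2 x) -> jsr A <= s.
Proof.
move=> s0 hA; apply: jsr_le => // k.
set E := [set _ | f in _].
have hop : forall f : 'I_k.+1 -> I,
    opnorm2 (\prod_(j < k.+1) A (f (rev_ord j))) <= s ^+ k.+1.
  move=> f; apply: opnorm2_le; first exact: exprn_ge0.
  by apply: prod_bound => // j x; apply: hA.
have E0 : E !=set0 by exists (opnorm2 (\prod_(j < k.+1) A ((fun _ => i0) (rev_ord j)))), (fun _ => i0).
have hsup : sup E <= s ^+ k.+1.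
  by apply: ge_sup => // _ [f _ <-]; apply: hop.
have sup0 : 0 <= sup E.
  have hs : has_sup E by split => //; exists (s ^+ k.+1) => _ [f _ <-]; apply: hop.
  case: E0 => e he; apply: (le_trans _ (sup_upper_bound hs he)).
  by case: he => f _ <-; apply: opnorm2_ge0.
have k0 : 0 <= (k.+1%:R : R)^-1 by rewrite invr_ge0.
apply: (le_trans (ge0_ler_powR k0 _ _ hsup)); rewrite ?nnegrE ?exprn_ge0 //.
by rewrite -powR_mulrn // -powRrM mulfV ?powRr1 // pnatr_eq0.
Qed.


Lemma q_lt1 (a C X : R) : 0 < a -> a < 2 * C / X ^+ 2 ->
  Num.sqrt (1 - 2 * a * C + a ^+ 2 * X ^+ 2) < 1.
Proof.
move=> a0 h.
have [X0|Xn0] := eqVneq X 0.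
  by move: h; rewrite X0 expr0n /= invr0 mulr0 => h; have := lt_trans a0 h; rewrite ltxx.
have X2 : 0 < X ^+ 2 by rewrite exprn_even_gt0.
rewrite ltr_pdivlMr // in h.
rewrite -[X in _ < X]sqrtr1 ltr_sqrt ?ltr01 //.
have h2 : a * (a * X ^+ 2) < a * (2 * C) by rewrite ltr_pM2l.
rewrite mulrA -expr2 in h2.
lra.
Qed.

End Aux.

Unset Implicit Arguments. Set Strict Implicit.

Theorem corollary1 (R : realType) (nS nA m : nat)
  (P : 'M[R]_(nA * nS, nS)) (gamma : R) (Phi : 'M[R]_(nA * nS, m))
  (d : 'rV[R]_(nA * nS)) (alpha : R)
  (hnS : (0 < nS)%N) (hnA : (0 < nA)%N) (hm : (0 < m)%N)
  (hP0 : forall i j, 0 <= P i j)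
  (hP1 : forall i, \sum_(j < nS) P i j = 1)
  (hgamma : 0 < gamma < 1)
  (hPhi : \rank Phi = m)
  (hd0 : forall j, 0 < d 0 j)
  (hd1 : \sum_(j < nA * nS) d 0 j = 1)
  (halpha : 0 < alpha < 1) :
  let M := Mpi Phi d P gamma in
  let c := inf [set lambda_min (2^-1 *: (M pi + (M pi)^T)) | pi in [set: policy nS nA]] in
  let L := sup [set opnorm2 (M pi) | pi in [set: policy nS nA]] in
  forall eta : R, 0 <= eta ->
  let Leta := sup [set opnorm2 (M pi + eta%:M) | pi in [set: policy nS nA]] in
  let rho := jsr (fun pi : policy nS nA => 1%:M - alpha *: (M pi + eta%:M)) in
  [/\ rho <= Num.sqrt (1 - 2 * alpha * (c + eta) + alpha ^+ 2 * Leta ^+ 2),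
      Leta <= L + eta,
      rho <= Num.sqrt (1 - 2 * alpha * (c + eta) + alpha ^+ 2 * (L + eta) ^+ 2),
      (0 < c + eta -> alpha < 2 * (c + eta) / Leta ^+ 2 -> rho < 1) &
      (0 < c + eta -> alpha < 2 * (c + eta) / (L + eta) ^+ 2 -> rho < 1)].
Proof.
move=> M c L eta eta0 Leta rho.
have /andP [hal0 hal1] := halpha.
pose pi0 : policy nS nA := [ffun _ => Ordinal hnA].
have hc : forall pi, c <= lambda_min (2^-1 *: (M pi + (M pi)^T)).
  move=> pi; apply: (ge_inf (fin_lb _)); by exists pi.
have hS : forall pi (x : 'cV[R]_m), c * dot x x <= dot x (M pi *m x).
  move=> pi x.
  have sym : (2^-1 *: (M pi + (M pi)^T))^T = 2^-1 *: (M pi + (M pi)^T).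
    by rewrite linearZ /= linearD /= trmxK addrC.
  have := rayleigh hm sym x.
  have -> : dot x ((2^-1 *: (M pi + (M pi)^T)) *m x) = dot x (M pi *m x).
    rewrite -scalemxAl dotZr mulmxDl dotDr (dot_mulmx (M pi)^T) trmxK dotC.
    lra.
  move=> h; apply: le_trans h; rewrite ler_wpM2r ?dot_ge0 ?hc //.
have hLsup : has_sup [set opnorm2 (M pi + eta%:M) | pi in [set: policy nS nA]].
  by split; [exists (opnorm2 (M pi0 + eta%:M)), pi0 | apply: fin_ub].
have hLeta : forall pi, opnorm2 (M pi + eta%:M) <= Leta.
  by move=> pi; apply: (sup_upper_bound hLsup); exists pi.
have Leta0 : 0 <= Leta := le_trans (opnorm2_ge0 _) (hLeta pi0).
have hLsup' : has_sup [set opnorm2 (M pi) | pi in [set: policy nS nA]].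
  by split; [exists (opnorm2 (M pi0)), pi0 | apply: fin_ub].
have hL : forall pi, opnorm2 (M pi) <= L.
  by move=> pi; apply: (sup_upper_bound hLsup'); exists pi.
set q := 1 - 2 * alpha * (c + eta) + alpha ^+ 2 * Leta ^+ 2.
have key : forall pi x,
    vnorm2 ((1%:M - alpha *: (M pi + eta%:M)) *m x) <= Num.sqrt q * vnorm2 x.
  move=> pi x.
  set B := M pi + eta%:M.
  have Ax : (1%:M - alpha *: B) *m x = x - alpha *: (B *m x).
    by rewrite mulmxBl mul1mx -scalemxAl.
  have Bx : B *m x = M pi *m x + eta *: x by rewrite mulmxDl mul_scalar_mx.
  have h1 : (c + eta) * dot x x <= dot x (B *m x).
    by rewrite Bx dotDr dotZr; have := hS pi x; lra.
  have h2 : dot (B *m x) (B *m x) <= Leta ^+ 2 * dot x x.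
    rewrite -!vnorm2_sq -exprMn !expr2.
    have hb : vnorm2 (B *m x) <= Leta * vnorm2 x.
      apply: (le_trans (opnorm2_vec B x)).
      by rewrite ler_wpM2r ?vnorm2_ge0 ?hLeta.
    by apply: ler_pM; rewrite ?vnorm2_ge0.
  have h3 : dot ((1%:M - alpha *: B) *m x) ((1%:M - alpha *: B) *m x) <= q * dot x x.
    rewrite Ax dotBl !dotBr !dotZl !dotZr (dotC (B *m x) x).
    have := ler_wpM2l (ltW hal0) h1.
    have := ler_wpM2l (sqr_ge0 alpha) h2.
    rewrite /q; lra.
  rewrite vnorm2E; apply: (le_trans (ler_wsqrtr h3)).
  have [q0|q0] := leP 0 q.
    by rewrite sqrtrM // vnorm2E.
  rewrite ler0_sqrtr ?mulr_ge0 ?sqrtr_ge0 ?vnorm2_ge0 //.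
  by rewrite nmulr_rle0 ?dot_ge0.
have part1 : rho <= Num.sqrt q := jsr_bound pi0 (sqrtr_ge0 _) key.
have part2 : Leta <= L + eta.
  apply: ge_sup; first by exists (opnorm2 (M pi0 + eta%:M)), pi0.
  move=> _ [pi _ <-].
  apply: (@le_trans _ _ (opnorm2 (M pi) + eta)); last by rewrite lerD2r hL.
  apply: opnorm2_le; first by rewrite addr_ge0 ?opnorm2_ge0.
  move=> x; rewrite mulmxDl mul_scalar_mx.
  apply: (le_trans (vnorm2D _ _)).
  rewrite vnorm2Z ger0_norm // mulrDl lerD2r.
  exact: opnorm2_vec.
have qq : q <= 1 - 2 * alpha * (c + eta) + alpha ^+ 2 * (L + eta) ^+ 2.
  rewrite /q lerD2l ler_wpM2l ?sqr_ge0 // !expr2.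
  by apply: ler_pM.
have part3 : rho <= Num.sqrt (1 - 2 * alpha * (c + eta) + alpha ^+ 2 * (L + eta) ^+ 2).
  exact: (le_trans part1 (ler_wsqrtr qq)).
split => //.
- by move=> _ h; apply: (le_lt_trans part1); apply: q_lt1.
- by move=> _ h; apply: (le_lt_trans part3); apply: q_lt1.
Qed.
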